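(* Under the standing assumptions below, for every $k\in\{0,\dots,n-1\}$: (a) $\prec_k\subseteq\prec_{k+1}$; (b) for all $c,d\in I$, $c\prec_{k+1}d$ implies $c\prec d$ and $\mathrm{var}(c)\setminus X_k\subseteq\mathrm{var}(d)\setminus X_k$; (c) for every $k\in\{0,\dots,n\}$, $\preceq_k$ is a partial order on $I$.
   Context: Standing assumptions: $I$ is a finite set of weighted constraints with default values on a finite domain $D$ such that distinct constraints have distinct variable sets, $\mathcal H(I)=(\mathrm{var}(I),\{\mathrm{var}(c)\mid c\in I\})$ is $\beta$-acyclic, and $(x_1,\dots,x_n)$ is a $\beta$-elimination order of $\mathcal H(I)$ (an enumeration of $\mathrm{var}(I)$ such that for each $k$, $x_{k+1}$ is a nest point—the edges containing it are totally ordered by inclusion—of the hypergraph with vertices $\mathrm{var}(I)\setminus X_k$ and edges $\{e\setminus X_k\}\setminus\{\emptyset\}$). $X_k=\{x_1,\dots,x_k\}$. For $c,d\in I$: $c\prec d$ iff there is $k$ with $\mathrm{var}(c)\setminus X_k\subsetneq\mathrm{var}(d)\setminus X_k$; $c\preceq d$ iff $c\prec d$ or $c=d$. Relations $\prec_k$ are defined inductively: $\prec_0=\emptyset$; $c\prec_{k+1}d$ iff $c\prec_k d$ or there is $e\in I$ with $c\preceq_k e\prec d$ and $x_{k+1}\in\mathrm{var}(d)\cap\mathrm{var}(e)$; here $c\preceq_k d$ iff $c=d$ or $c\prec_k d$. *)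

(* Defs.v *)
From mathcomp Require Import all_boot.
Set Implicit Arguments. Unset Strict Implicit. Unset Printing Implicit Defensive.

Section Defs.
(* V : variables, C : the (finite) set I of constraints, var c : scope of c. *)
Variables (V C : finType) (var : C -> {set V}) (xs : seq V).

Definition varI : {set V} := \bigcup_(c : C) var c.

Definition X (k : nat) : {set V} := [set x in take k xs].

(* x_{k+1} (= nth element of index k, 0-based) is a nest point of the
   hypergraph with vertices var(I) \ X_k and edges {e \ X_k} \ {emptyset}:
   the (nonempty, since they contain x_{k+1}) edges containing it are
   totally ordered by inclusion. *)
Definition nest_point_at (k : nat) (x : V) : Prop :=
  x \in varI :\: X k /\
  forall c d : C, x \in var c :\: X k -> x \in var d :\: X k ->
    (var c :\: X k \subset var d :\: X k) \/ (var d :\: X k \subset var c :\: X k).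

Definition beta_elim_order : Prop :=
  uniq xs /\ [set x in xs] = varI /\
  forall k, k < size xs -> forall x, onth xs k = Some x -> nest_point_at k x.

Definition prec (c d : C) : Prop :=
  exists k : nat, var c :\: X k \proper var d :\: X k.

Fixpoint precK (k : nat) : C -> C -> Prop :=
  match k with
  | 0 => fun _ _ => False
  | k'.+1 => fun c d =>
      precK k' c d \/
      exists e : C, (c = e \/ precK k' c e) /\ prec e d /\
        exists x, onth xs k' = Some x /\ x \in var d /\ x \in var e
  end.

Definition preceqK (k : nat) (c d : C) : Prop := c = d \/ precK k c d.

End Defs.

Definition partial_order (T : Type) (R : T -> T -> Prop) : Prop :=
  (forall x, R x x) /\
  (forall x y, R x y -> R y x -> x = y) /\
  (forall x y z, R x y -> R y z -> R x z).

(* Main.v *)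
Require Import Defs.
From mathcomp Require Import all_boot.

Lemma Xmono (V : finType) (xs : seq V) i j : i <= j -> X xs i \subset X xs j.
Proof.
move=> hij; apply/subsetP=> x; rewrite !inE => hx.
by rewrite -(subnKC hij) takeD mem_cat hx.
Qed.

Lemma submono (V : finType) (xs : seq V) (A B : {set V}) i j : i <= j ->
  A :\: X xs i \subset B :\: X xs i -> A :\: X xs j \subset B :\: X xs j.
Proof.
move=> hij /subsetP h; apply/subsetP=> x; rewrite !in_setD => /andP[hj hA].
have hi : x \notin X xs i.
  by apply/negP=> hi; move/negP: hj; apply; exact: (subsetP (@Xmono V xs i j hij) _ hi).
by move: (h x); rewrite !in_setD hi hA /= => /(_ isT) ->; rewrite hj.
Qed.

Arguments submono {V xs A B i j}.

Lemma prec_trans (V C : finType) (var : C -> {set V}) xs c e d :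
  prec var xs c e -> prec var xs e d -> prec var xs c d.
Proof.
move=> [i hi] [j hj]; case: (leqP i j) => h.
- exists j; apply: sub_proper_trans hj.
  by apply: submono h _; apply: proper_sub.
- exists i; apply: proper_sub_trans hi _.
  by apply: submono (ltnW h) _; apply: proper_sub.
Qed.

Lemma prec_antisym (V C : finType) (var : C -> {set V}) xs c d :
  prec var xs c d -> prec var xs d c -> False.
Proof.
move=> [i hi] [j hj]; case: (leqP i j) => h.
- have := submono h (proper_sub hi).
  by move: hj; rewrite properE => /andP[_ /negP].
- have := submono (ltnW h) (proper_sub hj).
  by move: hi; rewrite properE => /andP[_ /negP].
Qed.

Arguments prec_antisym {V C var xs c d}.
Arguments prec_trans {V C var xs c e d}.

Lemma onth_lt (T : Type) (s : seq T) k x : onth s k = Some x -> k < size s.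
Proof. by move=> h; rewrite ltnNge; apply/negP=> /onth_default; rewrite h. Qed.

Arguments onth_lt {T s k x}.

Lemma nest_info (V C : finType) (var : C -> {set V}) xs k x :
  beta_elim_order var xs -> onth xs k = Some x -> nest_point_at var xs k x.
Proof. by move=> [_ [_ H]] hx; exact: (H k (onth_lt hx) x hx). Qed.

Arguments nest_info {V C var xs k x}.

Lemma step (V C : finType) (var : C -> {set V}) xs k :
  beta_elim_order var xs ->
  (forall c e, precK var xs k c e -> prec var xs c e /\ var c :\: X xs k \subset var e :\: X xs k) ->
  forall c d, precK var xs k.+1 c d ->
    prec var xs c d /\ var c :\: X xs k \subset var d :\: X xs k.
Proof.
move=> Hb IH c d [/IH //|[e [hce [hed [x [hx [xd xe]]]]]]].
have [hxI Hn] := nest_info Hb hx.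
have xnX : x \notin X xs k by move: hxI; rewrite in_setD => /andP[].
have hED : var e :\: X xs k \subset var d :\: X xs k.
  case: (hed) => j hj; case: (leqP j k) => hjk.
    exact: submono hjk (proper_sub hj).
  have hx1 : x \in var e :\: X xs k by rewrite in_setD xnX xe.
  have hx2 : x \in var d :\: X xs k by rewrite in_setD xnX xd.
  case: (Hn e d hx1 hx2) => [//|hde].
  exfalso; have := submono (ltnW hjk) hde.
  by move: hj; rewrite properE => /andP[_ /negP].
case: hce => [->|/IH [h1 h2]]; first by split.
by split; [apply: prec_trans h1 hed | apply: subset_trans h2 hED].
Qed.

Arguments step {V C var xs k}.

Lemma R (V C : finType) (var : C -> {set V}) xs k :
  beta_elim_order var xs -> k <= size xs ->
  forall c d, precK var xs k c d -> prec var xs c d /\ var c :\: X xs k \subset var d :\: X xs k.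
Proof.
move=> Hb; elim: k => [|k IH] hk c d; first by [].
move=> /(step Hb (IH (ltnW hk))) [h1 h2]; split=> //.
exact: submono (leqnSn k) h2.
Qed.

Arguments R {V C var xs k}.

Lemma precK_trans (V C : finType) (var : C -> {set V}) xs k :
  beta_elim_order var xs -> k <= size xs ->
  forall c d e, precK var xs k c d -> precK var xs k d e -> precK var xs k c e.
Proof.
move=> Hb; elim: k => [|k IH] hk c d e //=.
have IH' := IH (ltnW hk).
have Rk := R Hb (ltnW hk).
case=> [hcd|[f [hcf [hfd [x [hx [xd xf]]]]]]];
  case=> [hde|[g [hdg [hge [y [hy [ye yg]]]]]]].
- by left; apply: IH' hcd hde.
- right; exists g; split; last by split=> //; exists y.
  by right; case: hdg => [<-//|h]; apply: IH' hcd h.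
- right; exists f; split=> //; split.
    by apply: prec_trans hfd (proj1 (Rk _ _ hde)).
  exists x; split=> //; split=> //.
  have [hxI _] := nest_info Hb hx.
  have xnX : x \notin X xs k by move: hxI; rewrite in_setD => /andP[].
  have := subsetP (proj2 (Rk _ _ hde)) x; rewrite !in_setD xnX xd /=.
  by move=> /(_ isT).
- move: hy; rewrite hx => -[hxy]; subst y.
  right; exists f; split=> //; split; last by exists x.
  apply: prec_trans hfd _.
  case: hdg => [->//|/Rk [h _]]; exact: prec_trans h hge.
Qed.

Arguments precK_trans {V C var xs k}.

Theorem lemma4 (V C : finType) (var : C -> {set V}) (xs : seq V)
  (Hinj : injective var) (Helim : beta_elim_order var xs) :
  (forall k, k < size xs ->
     (forall c d, precK var xs k c d -> precK var xs k.+1 c d) /\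
     (forall c d, precK var xs k.+1 c d ->
        prec var xs c d /\ var c :\: X xs k \subset var d :\: X xs k)) /\
  (forall k, k <= size xs -> partial_order (preceqK var xs k)).
Proof.
split.
  move=> k hk; split; first by move=> c d h; left.
  exact: step Helim (R Helim (ltnW hk)).
move=> k hk; split; first by move=> c; left.
split.
  move=> c d [//|h1] [<-//|h2].
  by exfalso; apply: prec_antisym (proj1 (R Helim hk _ _ h1)) (proj1 (R Helim hk _ _ h2)).
move=> c d e [<-//|h1] [<-|h2]; first by right.
by right; apply: precK_trans h1 h2.
Qed.
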